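(* Let $G$ be a graph of girth at least $6$, $v\in V(G)$, $q$ a positive integer and $c=4q+2$. For $t\in\{2q+1,\dots,4q+2\}$ define $\mu_t:V(G[K_q])\to[c]$ by $\mu_t(x,i)=i$ if $d_G(x,v)\in\{0,2\}$, $\mu_t(x,i)=q+i$ if $d_G(x,v)=1$, and $\mu_t(x,i)=t$ if $d_G(x,v)\ge 3$ (including $d_G(x,v)=\infty$). Then $\{\mu_t: 2q+1\le t\le 4q+2\}$ induces a clique (of $2q+2$ vertices) in $K_c^{G[K_q]}$.
   Context: $[c]=\{1,\dots,c\}$; $d_G$ is the graph distance in $G$. $G[K_q]$ has vertex set $V(G)\times[q]$, with $(x,i)\sim(y,j)$ iff $xy\in E(G)$, or $x=y$ and $i\ne j$. $K_c^{F}$ has as vertices all maps $V(F)\to[c]$, with $f\sim g$ iff $f(x)\ne g(y)$ and $f(y)\ne g(x)$ for every edge $xy$ of $F$. *)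

(* Defs.v *)
From mathcomp Require Import all_boot.
Set Implicit Arguments. Unset Strict Implicit. Unset Printing Implicit Defensive.

Definition simple_graph (T : finType) (e : rel T) : Prop :=
  symmetric e /\ irreflexive e.

Definition girth_ge (T : finType) (e : rel T) (g : nat) : Prop :=
  forall s : seq T, 3 <= size s -> ucycle e s -> g <= size s.

Fixpoint walk_le (T : finType) (e : rel T) (n : nat) (x y : T) : bool :=
  if n is n'.+1 then (x == y) || [exists z, e x z && walk_le e n' z y]
  else x == y.

(* graph distance d_G(x,y); None stands for infinity (no path).
   In a finite graph a shortest path has length < #|T|. *)
Definition gdist (T : finType) (e : rel T) (x y : T) : option nat :=
  let k := find (fun k => walk_le e k x y) (iota 0 #|T|) in
  if k < #|T| then Some k else None.

(* the lexicographic product G[K_q], vertex set T * [q]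
   (the index i : 'I_q stands for the element i+1 of [q]) *)
Definition lexK (T : finType) (e : rel T) (q : nat) : rel (T * 'I_q) :=
  fun a b => e a.1 b.1 || ((a.1 == b.1) && (a.2 != b.2)).

(* vertices of K_c^F: maps V(F) -> [c] = {1,...,c} (colours are nats) *)
Definition cmap (V : Type) (c : nat) (f : V -> nat) : Prop :=
  forall u, 1 <= f u <= c.

Definition expadj (V : Type) (F : rel V) (f g : V -> nat) : Prop :=
  forall x y, F x y -> f x != g y /\ f y != g x.

Definition mu (T : finType) (e : rel T) (v : T) (q t : nat) (a : T * 'I_q) : nat :=
  match gdist e a.1 v with
  | Some 0 | Some 2 => (a.2 : nat).+1
  | Some 1 => q + (a.2 : nat).+1
  | _ => t
  end.

Arguments mu {T} e v q t a.
Arguments lexK {T} e q a b.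

(* Main.v *)
Require Import Defs.
From mathcomp Require Import all_boot.
From mathcomp Require Import zify.

Section S.
Variables (T : finType) (e : rel T).

Lemma gdistP x y k : gdist e x y = Some k ->
  walk_le e k x y /\ forall j, j < k -> ~~ walk_le e j x y.
Proof.
rewrite /gdist; case: ifP => // Hlt [<-]; split.
  have Hh : has (fun k => walk_le e k x y) (iota 0 #|T|) by rewrite has_find size_iota.
  have := nth_find 0 Hh; by rewrite nth_iota.
move=> j Hj; have := before_find 0 Hj; rewrite nth_iota ?add0n => [->//|].
exact: ltn_trans Hj Hlt.
Qed.

Lemma d0 {x y} : gdist e x y = Some 0 -> x = y.
Proof. by case/gdistP => /= /eqP. Qed.

Lemma d1 {x y} : gdist e x y = Some 1 -> e x y.
Proof.
case/gdistP => /= /orP [/eqP ->|/existsP [z /andP [Hz /eqP <-]]] // H.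
by have := H 0 isT; rewrite /= eqxx.
Qed.

Lemma d2 {x y} : gdist e x y = Some 2 ->
  [/\ x != y, ~~ e x y & exists z, e x z && e z y].
Proof.
case/gdistP => /= H1 H.
have H0 := H 0 isT; have H1' := H 1 isT; rewrite /= in H0 H1'.
move: H1'; rewrite negb_or => /andP [_ Hn].
have Hxy : ~~ e x y.
  apply/negP => Hxy; move/negP: Hn; apply; apply/existsP; exists y; by rewrite Hxy eqxx.
split => //.
move: H1; rewrite (negbTE H0) /= => /existsP [z /andP [Hz /orP [/eqP Hzy|/existsP [w /andP [Hw /eqP Hwy]]]]].
  by subst z; rewrite Hz in Hxy.
by exists z; rewrite Hz -Hwy Hw.
Qed.

Hypothesis sg : simple_graph e.
Hypothesis gi : girth_ge e 6.

Lemma irr x : e x x = false.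
Proof. by case: sg => _ ->. Qed.
Lemma sym x y : e x y = e y x.
Proof. by case: sg => ->. Qed.

Lemma neq_of {x y} : e x y -> x != y.
Proof. by apply: contraTneq => ->; rewrite irr. Qed.

Lemma no_tri {x y z} : e x y -> e y z -> e z x -> False.
Proof.
move=> h1 h2 h3; have := gi [:: x; y; z] isT.
rewrite /ucycle /= h1 h2 h3 /= !inE negb_or (neq_of h1) (neq_of h2).
rewrite eq_sym (neq_of h3) /=; by move=> /(_ isT).
Qed.

Lemma no_pent {a b c d f} : e a b -> e b c -> e c d -> e d f -> e f a ->
  uniq [:: a; b; c; d; f] -> False.
Proof.
move=> h1 h2 h3 h4 h5 u; have := gi [:: a; b; c; d; f] isT.
rewrite /ucycle /= h1 h2 h3 h4 h5 /=; move: u => /= /and5P [-> -> -> -> _] /=; by move=> /(_ isT).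
Qed.

Lemma key v q t t' x y (i j : 'I_q) : 2 * q + 1 <= t -> 2 * q + 1 <= t' -> t != t' ->
  e x y -> mu e v q t (x, i) != mu e v q t' (y, j).
Proof.
move=> Ht Ht' Htt Exy; rewrite /mu /=.
have hi := ltn_ord i; have hj := ltn_ord j.
case Dx: (gdist e x v) => [[|[|[|dx]]]|];
case Dy: (gdist e y v) => [[|[|[|dy]]]|]; try lia.
- by move: (d0 Dx) (d0 Dy) Exy => -> ->; rewrite irr.
- move: (d0 Dx) Exy => ->; case: (d2 Dy) => _ /negP + _; by rewrite sym.
- move: (d1 Dx) (d1 Dy) => a b; have c : e v x by rewrite sym. 
  by case: (no_tri Exy b c).
- move: (d0 Dy) Exy => ->; case: (d2 Dx) => _ /negP + _; by [].
- case: (d2 Dx) (d2 Dy) => nx nxe [a /andP [xa av]] [ny nye [b /andP [yb bv]]].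
  apply/negP => _.
  have [Hab|nab] := eqVneq a b.
    subst b; have h : e a x by rewrite sym.
    by case: (no_tri h Exy yb).
  have bv' : e v b by rewrite sym.
  have ya : y != a by apply: contraNneq nye => ->.
  have xb : x != b by apply: contraNneq nxe => ->.
  have yb' : e y b := yb.
  apply: (no_pent (a:=v) (b:=a) (c:=x) (d:=y) (f:=b)) => //; try by rewrite sym.
  rewrite /= !inE !negb_or.
  have h1 : v != a by rewrite eq_sym (neq_of av).
  have h2 : v != x by rewrite eq_sym.
  have h3 : v != y by rewrite eq_sym.
  have h4 : v != b by rewrite eq_sym (neq_of bv).
  have h5 : a != x by rewrite eq_sym (neq_of xa).
  have h6 : a != y by rewrite eq_sym.
  by rewrite h1 h2 h3 h4 h5 h6 nab (neq_of Exy) xb (neq_of yb).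
Qed.
End S.

Theorem claim4 (T : finType) (e : rel T) (v : T) (q : nat) :
  simple_graph e -> girth_ge e 6 -> 0 < q ->
  (forall t, 2 * q + 1 <= t <= 4 * q + 2 -> cmap (4 * q + 2) (mu e v q t)) /\
  (forall t t', 2 * q + 1 <= t <= 4 * q + 2 -> 2 * q + 1 <= t' <= 4 * q + 2 ->
     t != t' -> expadj (lexK e q) (mu e v q t) (mu e v q t')).
Proof.
move=> sg gi q0; split.
  move=> t /andP [h1 h2] [x i]; have hi := ltn_ord i; rewrite /mu /=.
  case: (gdist e x v) => [[|[|[|dx]]]|]; lia.
move=> t t' /andP [h1 h2] /andP [h3 h4] htt [x i] [y j] /orP [Exy|/andP [/eqP /= Exy nij]].
  split; first exact: key.
  apply: key => //.
  by rewrite (@sym _ _ sg) (Exy : e x y).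
subst y; rewrite /mu /=; have hi := ltn_ord i; have hj := ltn_ord j.
move: nij; rewrite -!(inj_eq val_inj) /=.
case: (gdist e x v) => [[|[|[|dx]]]|]; lia.
Qed.
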